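(* Let $p_1,\dots,p_r,q_1,\dots,q_s$ be positive integers with $\sum_ip_i=\sum_jq_j$ and $\gcd(p_1,\dots,q_s)=1$, let $q$ be a prime power, $\lambda\in\mathbb{F}_q^\times$, and let $C$ be a non-empty cell with $|S(C)|\le r+s-1$. Then $$N_{C,\lambda}=\frac{(q-1)^{r+s-l(C)-2}}{q}+\frac{(-1)^{|S(C)|}(q-1)^{|S(C)|-l(C)-1}}{q}\sum_{m=0}^{q-2}\delta(a_Sm)\prod_{i=1}^rg(p_im)\prod_{j=1}^sg(-q_jm)\,\omega(\epsilon\lambda)^m,$$ where $\epsilon=(-1)^{q_1+\cdots+q_s}$ and $\delta(x)=1$ if $x\equiv0\pmod{q-1}$ and $0$ otherwise. (In particular the count does not depend on the choice of the coordinate set equal to $1$.)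
   Context: Fix a nontrivial additive character $\psi_q$ of $\mathbb{F}_q$, a generator $\omega$ of the character group of $\mathbb{F}_q^\times$, and $g(m)=\sum_{x\in\mathbb{F}_q^\times}\omega(x)^m\psi_q(x)$. A cell is a finite (possibly empty) sequence of distinct pairs $(i_1,j_1),\dots,(i_l,j_l)$ with $1\le i_k\le r$, $1\le j_k\le s$, $i_1\le\cdots\le i_l$, $j_1\le\cdots\le j_l$; $l(C)=l$, $S_x(C)=\{i_1,\dots,i_l\}$, $S_y(C)=\{j_1,\dots,j_l\}$, $|S(C)|=|S_x(C)|+|S_y(C)|$, and $a_S=\gcd(\{p_i:i\in S_x(C)\}\cup\{q_j:j\in S_y(C)\})$. $N'_{C,\lambda}$ is the number of tuples $(x_i)_{i\notin S_x(C)},(y_j)_{j\notin S_y(C)},z$ with all entries in $\mathbb{F}_q^\times$, where one chosen coordinate among these $x_i,y_j$ is fixed to be $1$, satisfying $\sum_{i\notin S_x}x_i=\sum_{j\notin S_y}y_j$ and $\lambda z^{a_S}\prod_{i\notin S_x}x_i^{p_i}=\prod_{j\notin S_y}y_j^{q_j}$; and $N_{C,\lambda}=(q-1)^{|S(C)|-l(C)-1}N'_{C,\lambda}$. *)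

(* Defs.v *)
From HB Require Import structures.
From mathcomp Require Import all_boot all_order all_algebra all_field.
Set Implicit Arguments. Unset Strict Implicit. Unset Printing Implicit Defensive.
Import Order.TTheory GRing.Theory Num.Theory.
Local Open Scope ring_scope.

Definition is_cell (r s : nat) (C : seq ('I_r * 'I_s)) : bool :=
  uniq C && sorted (fun a b : 'I_r * 'I_s => ((a.1 <= b.1)%N && (a.2 <= b.2)%N)) C.

Definition cellSx (r s : nat) (C : seq ('I_r * 'I_s)) : {set 'I_r} :=
  [set i | has (fun a : 'I_r * 'I_s => a.1 == i) C].
Definition cellSy (r s : nat) (C : seq ('I_r * 'I_s)) : {set 'I_s} :=
  [set j | has (fun a : 'I_r * 'I_s => a.2 == j) C].

Definition cellS (r s : nat) (C : seq ('I_r * 'I_s)) : nat :=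
  (#|cellSx C| + #|cellSy C|)%N.

Definition cell_a (r s : nat) (p : 'I_r -> nat) (q : 'I_s -> nat)
    (C : seq ('I_r * 'I_s)) : nat :=
  gcdn (\big[gcdn/0%N]_(i in cellSx C) p i) (\big[gcdn/0%N]_(j in cellSy C) q j).

Definition gauss (F : finFieldType) (psi omega : F -> algC) (m : int) : algC :=
  \sum_(x : F | x != 0) omega x ^ m * psi x.

(* N'_{C,lambda}: tuples (x_i)_{i notin S_x}, (y_j)_{j notin S_y}, z, all in F^x,
   with the chosen coordinate c fixed to 1.  The tuples indexed by the
   complements are encoded as full families x : 'I_r -> F, y : 'I_s -> F whose
   entries at indices in S_x (resp. S_y) are padded with the constant 1
   (a bijective encoding). *)
Definition Nprime (F : finFieldType) (r s : nat) (p : 'I_r -> nat) (q : 'I_s -> nat)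
    (C : seq ('I_r * 'I_s)) (lam : F) (c : 'I_r + 'I_s) : nat :=
  #|[set t : {ffun 'I_r -> F} * {ffun 'I_s -> F} * F |
      let: (x, y, z) := t in
      [&& [forall i, if i \in cellSx C then x i == 1 else x i != 0],
          [forall j, if j \in cellSy C then y j == 1 else y j != 0],
          z != 0,
          (match c with inl i => x i == 1 | inr j => y j == 1 end),
          \sum_(i | i \notin cellSx C) x i == \sum_(j | j \notin cellSy C) y j &
          lam * z ^+ cell_a p q C * \prod_(i | i \notin cellSx C) x i ^+ p i
            == \prod_(j | j \notin cellSy C) y j ^+ q j]]|.

Definition Ncell (F : finFieldType) (r s : nat) (p : 'I_r -> nat) (q : 'I_s -> nat)
    (C : seq ('I_r * 'I_s)) (lam : F) (c : 'I_r + 'I_s) : nat :=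
  ((#|F|.-1) ^ (cellS C - size C - 1) * Nprime p q C lam c)%N.

(* Main.v *)
Require Import Defs.
From HB Require Import structures.
From mathcomp Require Import all_boot all_order all_algebra all_field.
From mathcomp Require Import ring zify.
Import Order.TTheory GRing.Theory Num.Theory.
Set Implicit Arguments. Unset Strict Implicit. Unset Printing Implicit Defensive.
Local Open Scope ring_scope.

Section Chars.
Variable F : finFieldType.
Variables (psi omega : F -> algC).
Hypothesis psi0 : psi 0 = 1.
Hypothesis psiD : forall x y : F, psi (x + y) = psi x * psi y.
Hypothesis psi_nontriv : exists x : F, psi x != 1.
Hypothesis omega1 : omega 1 = 1.
Hypothesis omegaM : forall x y : F, x != 0 -> y != 0 -> omega (x * y) = omega x * omega y.
Hypothesis omega_gen : forall m : nat,
      (forall x : F, x != 0 -> omega x ^+ m = 1) -> (#|F|.-1 %| m)%N.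

Local Notation n := (#|F|.-1).

Lemma cardF : #|F| = n.+1.
Proof. by rewrite prednK // ltnW // finNzRing_gt1. Qed.

Lemma n_gt0 : (0 < n)%N.
Proof. by rewrite -ltnS -cardF finNzRing_gt1. Qed.

Lemma n_neq0 : (n%:R : algC) != 0.
Proof. by rewrite pnatr_eq0 -lt0n n_gt0. Qed.

Lemma card_nz : #|[pred x : F | x != 0]| = n.
Proof. exact: cardC1. Qed.

Lemma omegaV x : x != 0 -> omega x^-1 * omega x = 1.
Proof. by move=> x0; rewrite -omegaM ?invr_eq0 // mulVf. Qed.

Lemma omega_nz x : x != 0 -> omega x != 0.
Proof. by move=> x0; apply/eqP => h; move: (omegaV x0); rewrite h mulr0 => /esym/eqP; rewrite oner_eq0. Qed.

Lemma omegaVE x : x != 0 -> omega x^-1 = (omega x)^-1.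
Proof. by move=> x0; apply: (mulIf (omega_nz x0)); rewrite omegaV // mulVf // omega_nz. Qed.

Lemma omegaX x k : x != 0 -> omega (x ^+ k) = omega x ^+ k.
Proof.
move=> x0; elim: k => [|k IH]; first by rewrite !expr0.
by rewrite !exprS omegaM ?expf_neq0 // IH.
Qed.

Lemma xn1 (x : F) : x != 0 -> x ^+ n = 1.
Proof.
move=> x0; apply: (mulIf x0); rewrite mul1r -exprSr -cardF; exact: expf_card.
Qed.

Lemma omega_n x : x != 0 -> omega x ^+ n = 1.
Proof. by move=> x0; rewrite -omegaX // xn1. Qed.

Lemma omega_dvd x k : x != 0 -> (n %| k)%N -> omega x ^+ k = 1.
Proof.
by move=> x0 /dvdnP [d ->]; rewrite mulnC exprM omega_n // expr1n.
Qed.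

Lemma sum_omega k : \sum_(x | x != 0) omega x ^+ k = (n %| k)%:R * n%:R.
Proof.
case: (boolP (n %| k)%N) => hk.
  rewrite mul1r (eq_bigr (fun _ => 1)); last by move=> x x0; rewrite omega_dvd.
  by rewrite sumr_const card_nz.
rewrite mul0r.
have : ~~ [forall x, (x != 0) ==> (omega x ^+ k == 1)].
  apply/negP => /forallP h; apply: (negP hk); apply: omega_gen => x xnz.
  by apply/eqP; exact: (implyP (h x) xnz).
case/forallPn => x0; rewrite negb_imply => /andP[x0nz hx0].
set S := \sum_(x | x != 0) _.
have : S = omega x0 ^+ k * S.
  rewrite {1}/S (reindex_inj (mulfI x0nz)) /S /= mulr_sumr.
  apply: eq_big => [x|x]; first by rewrite mulf_eq0 (negPf x0nz).
  rewrite mulf_eq0 negb_or => /andP[_ xnz].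
  by rewrite omegaM // exprMn.
move/eqP; rewrite -subr_eq0 -{1}(mul1r S) -mulrBl mulf_eq0 subr_eq0 eq_sym (negPf hx0) /=.
by move/eqP.
Qed.

Lemma psi_sum (I : Type) (r : seq I) (P : pred I) (f : I -> F) :
  psi (\sum_(i <- r | P i) f i) = \prod_(i <- r | P i) psi (f i).
Proof. exact: (big_morph psi psiD psi0). Qed.

Lemma psi_nz x : psi x != 0.
Proof.
apply/eqP => h; move: (psiD x (- x)); rewrite subrr psi0 h mul0r => /eqP.
by rewrite oner_eq0.
Qed.

Lemma sum_psi0 : \sum_t psi t = 0.
Proof.
case: psi_nontriv => x0 hx0.
set S := \sum_t _.
have : S = psi x0 * S.
  rewrite {1}/S (reindex_inj (addIr x0)) /S /= mulr_sumr.
  by apply: eq_bigr => t _; rewrite psiD mulrC.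
move/eqP; rewrite -subr_eq0 -{1}(mul1r S) -mulrBl mulf_eq0 subr_eq0 eq_sym (negPf hx0) /=.
by move/eqP.
Qed.

Lemma sum_psi a : \sum_t psi (t * a) = (a == 0)%:R * #|F|%:R.
Proof.
case: (boolP (a == 0)) => [/eqP ->|a0].
  by rewrite mul1r (eq_bigr (fun _ => 1)) ?sumr_const ?card_ord // => t _; rewrite mulr0.
rewrite mul0r -[RHS](sum_psi0); by rewrite [RHS](reindex_inj (mulIf a0)).
Qed.

Lemma geom0 (w : algC) : w ^+ n = 1 -> w != 1 -> \sum_(m < n) w ^+ m = 0.
Proof.
move=> wn w1; move: (subrX1 w n); rewrite wn subrr => /esym/eqP.
by rewrite mulf_eq0 subr_eq0 (negPf w1) /= => /eqP.
Qed.

Lemma sum_m x : x != 0 -> \sum_(m < n) omega x ^+ m = (omega x == 1)%:R * n%:R.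
Proof.
move=> x0; case: (boolP (omega x == 1)) => [/eqP ->|h].
  by rewrite mul1r (eq_bigr (fun _ => 1)) ?sumr_const ?card_ord // => m _; rewrite expr1n.
by rewrite mul0r geom0 // omega_n.
Qed.

Lemma sum_dvd_ordN (N : nat) : (0 < N)%N ->
  \sum_(m < N) (N %| m)%:R * N%:R = N%:R :> algC.
Proof.
case: N => // N _; rewrite big_ord_recl /= mul1r.
rewrite big1 ?addr0 // => i _.
suff -> : (N.+1 %| bump 0 i)%N = false by rewrite mul0r.
apply/negP => /dvdn_leq; rewrite /bump /= add1n ltnS => /(_ isT).
by rewrite leqNgt ltnS ltn_ord.
Qed.

Lemma sum_dvd_ord : \sum_(m < n) (n %| m)%:R * n%:R = n%:R :> algC.
Proof. exact: sum_dvd_ordN n_gt0. Qed.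

Lemma omega_inj1 x : x != 0 -> omega x = 1 -> x = 1.
Proof.
move=> x0 hx.
pose K := [pred y : F | (y != 0) && (omega y == 1)].
have E1 : \sum_(y | y != 0) \sum_(m < n) omega y ^+ m = #|K|%:R * n%:R.
  rewrite (eq_bigr (fun y => (omega y == 1)%:R * n%:R)); last by move=> y y0; rewrite sum_m.
  rewrite -mulr_suml (bigID (fun y => omega y == 1)) /=.
  rewrite [X in _ + X]big1 ?addr0; last by move=> y /andP[_ /negPf ->].
  by rewrite (eq_bigr (fun _ => 1)) ?sumr_const // => y /andP[_ ->].
have E2 : \sum_(y | y != 0) \sum_(m < n) omega y ^+ m = n%:R.
  by rewrite exchange_big /= -sum_dvd_ord; apply: eq_bigr => m _; rewrite sum_omega.
have K1 : #|K| = 1%N.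
  apply/eqP; rewrite -(eqr_nat algC); apply/eqP.
  by apply: (mulIf n_neq0); rewrite -E1 E2 mul1r.
move/eqP/card1P: K1 => [y hy].
have h1 : 1 \in K by rewrite inE oner_neq0 omega1 eqxx.
have h2 : x \in K by rewrite inE x0 hx eqxx.
by rewrite hy in h1; rewrite hy in h2; rewrite (eqP h2) (eqP h1).
Qed.

Lemma omega_eq x y : x != 0 -> y != 0 -> (omega x == omega y) = (x == y).
Proof.
move=> x0 y0; apply/eqP/eqP => [h|->] //.
have xy0 : x / y != 0 by rewrite mulf_neq0 ?invr_eq0.
have : omega (x / y) = 1.
  by rewrite omegaM ?invr_eq0 // omegaVE // h mulfV // omega_nz.
by move/(omega_inj1 xy0)/(congr1 (fun t => t * y)); rewrite divfK // mul1r.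
Qed.

Lemma ind_omega x y : x != 0 -> y != 0 ->
  (x == y)%:R = n%:R^-1 * \sum_(m < n) omega (x / y) ^+ m.
Proof.
move=> x0 y0; have xy0 : x / y != 0 by rewrite mulf_neq0 ?invr_eq0.
rewrite sum_m // mulrCA mulVf ?n_neq0 // mulr1.
congr (_ %:R); rewrite omegaM ?invr_eq0 // omegaVE // -omega_eq //.
by rewrite -(inj_eq (mulIf (invr_neq0 (omega_nz y0)))) mulfV // omega_nz.
Qed.

Lemma ind_psi (x y : F) : (x == y)%:R = #|F|%:R^-1 * \sum_t psi (t * (x - y)).
Proof.
rewrite sum_psi subr_eq0 mulrCA mulVf ?mulr1 //.
by rewrite pnatr_eq0 cardF.
Qed.


Lemma omega_prod (I : Type) (r : seq I) (P : pred I) (f : I -> F) :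
  (forall i, P i -> f i != 0) ->
  omega (\prod_(i <- r | P i) f i) = \prod_(i <- r | P i) omega (f i).
Proof.
move=> hf.
have : (\prod_(i <- r | P i) f i != 0) /\ omega (\prod_(i <- r | P i) f i) = \prod_(i <- r | P i) omega (f i).
  apply: (big_rec2 (fun y1 y2 => (y1 != 0) /\ omega y1 = y2)).
    by rewrite oner_neq0 omega1.
  move=> i y1 y2 Pi [y10 <-]; split; first by rewrite mulf_neq0 // hf.
  by rewrite omegaM // hf.
by case.
Qed.

Lemma prod_nz (I : Type) (r : seq I) (P : pred I) (f : I -> F) :
  (forall i, P i -> f i != 0) -> \prod_(i <- r | P i) f i != 0.
Proof. by move=> hf; apply: (big_ind (fun y => y != 0)) => // [|x y ? ?]; [exact: oner_neq0|rewrite mulf_neq0]. Qed.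

Definition gsum (k : nat) := \sum_(x | x != 0) omega x ^+ k * psi x.
Definition gneg (k : nat) := \sum_(x | x != 0) omega x^-1 ^+ k * psi x.

Lemma sum_psi_nz : \sum_(x | x != 0) psi x = -1.
Proof.
have := sum_psi0; rewrite (bigD1 0) //= psi0 => /eqP; rewrite addrC addr_eq0 => /eqP ->.
by [].
Qed.

Lemma gsum_dvd k : (n %| k)%N -> gsum k = -1.
Proof.
move=> hk; rewrite /gsum -sum_psi_nz; apply: eq_bigr => x x0.
by rewrite omega_dvd // mul1r.
Qed.

Lemma gneg_dvd k : (n %| k)%N -> gneg k = -1.
Proof.
move=> hk; rewrite /gneg -sum_psi_nz; apply: eq_bigr => x x0.
by rewrite omega_dvd ?mul1r // invr_eq0.
Qed.

Lemma A_t (t : F) k : t != 0 ->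
  \sum_(w | w != 0) psi (t * w) * omega w ^+ k = omega t^-1 ^+ k * gsum k.
Proof.
move=> t0; have ti0 : t^-1 != 0 by rewrite invr_eq0.
rewrite (reindex_inj (mulfI ti0)) /= /gsum mulr_sumr.
apply: eq_big => [w|w]; first by rewrite mulf_eq0 (negPf ti0).
rewrite mulf_eq0 negb_or => /andP[_ w0].
by rewrite mulVKf // omegaM // exprMn mulrC mulrA.
Qed.

Lemma A_0 k : \sum_(w | w != 0) psi (0 * w) * omega w ^+ k = (n %| k)%:R * n%:R.
Proof.
by rewrite -sum_omega; apply: eq_bigr => w _; rewrite mul0r psi0 mul1r.
Qed.

Lemma B_t (t : F) k : t != 0 ->
  \sum_(w | w != 0) psi (- t * w) * omega w^-1 ^+ k = omega (- t) ^+ k * gneg k.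
Proof.
move=> t0; have nt0 : - t != 0 by rewrite oppr_eq0.
have ti0 : (- t)^-1 != 0 by rewrite invr_eq0.
rewrite (reindex_inj (mulfI ti0)) /= /gneg mulr_sumr.
apply: eq_big => [w|w]; first by rewrite mulf_eq0 (negPf ti0).
rewrite mulf_eq0 negb_or => /andP[_ w0].
rewrite mulVKf // invfM invrK omegaM ?invr_eq0 // exprMn.
by rewrite mulrC mulrA.
Qed.

Lemma B_0 k : \sum_(w | w != 0) psi (- 0 * w) * omega w^-1 ^+ k = (n %| k)%:R * n%:R.
Proof.
rewrite -sum_omega (reindex_inj invr_inj) /=.
apply: eq_big => [w|w _]; first by rewrite invr_eq0.
by rewrite oppr0 mul0r psi0 mul1r invrK.
Qed.

End Chars.
Lemma fam_sum (F : finFieldType) (I : finType) (S : {set I}) (f : I -> F -> algC) :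
  \sum_(x : {ffun I -> F} | [forall i, if i \in S then x i == 1 else x i != 0])
     \prod_(i | i \notin S) f i (x i)
  = \prod_(i | i \notin S) \sum_(w | w != 0) f i w.
Proof.
rewrite (big_distr_big_dep 1); apply: eq_bigl => x.
apply/forallP/pfamilyP => [h|[sup hin] i].
  split.
    apply/subsetP => i; rewrite !inE unfold_in /=; move: (h i); case: (i \in S) => //= /eqP ->.
    by rewrite eqxx.
  by move=> i; rewrite unfold_in /= => /negPf hi; rewrite unfold_in /=; move: (h i); rewrite hi.
case: (boolP (i \in S)) => hi.
  apply: contraTT hi => hx; move/subsetP: sup => /(_ i); rewrite !inE unfold_in /= => /(_ hx).
  by [].
by have := hin i; rewrite !unfold_in /= => /(_ hi).
Qed.

Lemma prod_zero (I : finType) (P : pred I) (f : I -> algC) i :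
  P i -> f i = 0 -> \prod_(j | P j) f j = 0.
Proof. by move=> Pi fi; rewrite (bigD1 i) //= fi mul0r. Qed.
Lemma cellSx_cons r s (a : 'I_r * 'I_s) C : cellSx (a :: C) = a.1 |: cellSx C.
Proof. by apply/setP => i; rewrite !inE eq_sym. Qed.
Lemma cellSy_cons r s (a : 'I_r * 'I_s) C : cellSy (a :: C) = a.2 |: cellSy C.
Proof. by apply/setP => i; rewrite !inE eq_sym. Qed.

Lemma cell_size r s (C : seq ('I_r * 'I_s)) : is_cell C -> C != [::] ->
  (size C < cellS C)%N.
Proof.
set e := (fun a b : 'I_r * 'I_s => ((a.1 <= b.1)%N && (a.2 <= b.2)%N)).
have etr : transitive e.
  by move=> b a c /andP[h1 h2] /andP[h3 h4]; apply/andP; split; [exact: leq_trans h1 h3|exact: leq_trans h2 h4].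
rewrite /is_cell /cellS; elim: C => [|a C IH] //= /andP[/andP[aC uC] sC] _.
case: C IH aC uC sC => [|b C] IH aC uC sC.
  rewrite cellSx_cons cellSy_cons.
  have -> : cellSx ([::] : seq ('I_r * 'I_s)) = set0 by apply/setP => i; rewrite !inE.
  have -> : cellSy ([::] : seq ('I_r * 'I_s)) = set0 by apply/setP => i; rewrite !inE.
  by rewrite !setU0 !cards1.
move: sC => /= /andP[eab pb].
have sC' : sorted e (b :: C) by [].
have {IH} IH := IH (introT andP (conj uC sC') : uniq (b :: C) && sorted e (b :: C)) isT.
have allb : all (e b) (b :: C) by rewrite /= /e !leqnn /=; exact: order_path_min pb.
have hx : a.1 \in cellSx (b :: C) -> a.1 = b.1.
  rewrite inE => /hasP [d dC /eqP da].
  move/allP: allb => /(_ d dC) /andP[h _]; move/andP: eab => [h' _].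
  by apply/val_inj/eqP; rewrite eqn_leq h' -da h.
have hy : a.2 \in cellSy (b :: C) -> a.2 = b.2.
  rewrite inE => /hasP [d dC /eqP da].
  move/allP: allb => /(_ d dC) /andP[_ h]; move/andP: eab => [_ h'].
  by apply/val_inj/eqP; rewrite eqn_leq h' -da h.
have ab : a != b by apply: contraNneq aC => ->; rewrite inE eqxx.
rewrite cellSx_cons cellSy_cons !cardsU1.
have : (a.1 \notin cellSx (b :: C)) || (a.2 \notin cellSy (b :: C)).
  rewrite -negb_and; apply/negP => /andP [h1 h2]; move/negP: ab; apply.
  by rewrite [a]surjective_pairing [b]surjective_pairing (hx h1) (hy h2).
move: IH; rewrite /=.
case: (a.1 \notin _); case: (a.2 \notin _) => //= IH _; rewrite ?add0n ?add1n; lia.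
Qed.

Lemma swap_in (I J L : finType) (P : pred I) (f : I -> J -> L -> algC) :
  \sum_(i | P i) \sum_j \sum_k f i j k = \sum_j \sum_k \sum_(i | P i) f i j k.
Proof. rewrite exchange_big /=; apply: eq_bigr => j _; exact: exchange_big. Qed.

Section Main.
Variable F : finFieldType.
Variables (psi omega : F -> algC).
Hypothesis psi0 : psi 0 = 1.
Hypothesis psiD : forall x y : F, psi (x + y) = psi x * psi y.
Hypothesis psi_nontriv : exists x : F, psi x != 1.
Hypothesis omega1 : omega 1 = 1.
Hypothesis omegaM : forall x y : F, x != 0 -> y != 0 -> omega (x * y) = omega x * omega y.
Hypothesis omega_gen : forall m : nat,
      (forall x : F, x != 0 -> omega x ^+ m = 1) -> (#|F|.-1 %| m)%N.
Variables (r s : nat) (p : 'I_r -> nat) (q : 'I_s -> nat).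
Hypothesis sum_eq : (\sum_(i < r) p i)%N = (\sum_(j < s) q j)%N.
Hypothesis gcd1 : gcdn (\big[gcdn/0%N]_(i < r) p i) (\big[gcdn/0%N]_(j < s) q j) = 1%N.
Variable lam : F.
Hypothesis lam0 : lam != 0.
Variable C : seq ('I_r * 'I_s).
Variable c : 'I_r + 'I_s.
Hypothesis c_ok : match c with inl i => i \notin cellSx C | inr j => j \notin cellSy C end.

Local Notation n := (#|F|.-1).
Let oVE := omegaVE omega1 omegaM.
Let oX := omegaX omega1 omegaM.
Let oProd := omega_prod omega1 omegaM.
Let sumO := sum_omega omega1 omegaM omega_gen.
Let At := A_t psi omegaM.
Let Bt := B_t psi omegaM.
Let A0 := A_0 psi0 omega1 omegaM omega_gen.
Let B0 := B_0 psi0 omega1 omegaM omega_gen.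
Let gsumD := gsum_dvd psi0 psiD psi_nontriv omega1 omegaM.
Let gnegD := gneg_dvd psi0 psiD psi_nontriv omega1 omegaM.
Let oD := omega_dvd omega1 omegaM.
Let oNZ := omega_nz omega1 omegaM.
Local Notation Sx := (cellSx C).
Local Notation Sy := (cellSy C).
Local Notation a := (cell_a p q C).

Definition Fx (x : {ffun 'I_r -> F}) := [forall i, if i \in Sx then x i == 1 else x i != 0].
Definition Fy (y : {ffun 'I_s -> F}) := [forall j, if j \in Sy then y j == 1 else y j != 0].
Definition SX (x : {ffun 'I_r -> F}) := \sum_(i | i \notin Sx) x i.
Definition SY (y : {ffun 'I_s -> F}) := \sum_(j | j \notin Sy) y j.
Definition PX (x : {ffun 'I_r -> F}) := \prod_(i | i \notin Sx) x i ^+ p i.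
Definition PY (y : {ffun 'I_s -> F}) := \prod_(j | j \notin Sy) y j ^+ q j.
Definition coordc (x : {ffun 'I_r -> F}) (y : {ffun 'I_s -> F}) :=
  match c with inl i => x i | inr j => y j end.
Definition sol x y (z : F) := (SX x == SY y) && (lam * z ^+ a * PX x == PY y).
Definition Bsol x y (z : F) := [&& Fx x, Fy y, z != 0 & sol x y z].

Definition G (u : F) : algC := \sum_x \sum_y \sum_z (Bsol x y z && (coordc x y == u))%:R.
Definition M : algC := \sum_x \sum_y \sum_z (Bsol x y z)%:R.

Lemma Nprime_G : (Nprime p q C lam c)%:R = G 1.
Proof.
rewrite /Nprime -sumr_const /G pair_bigA pair_bigA big_mkcond /=.
apply: eq_bigr => [[[x y] z]] _ /=; rewrite inE /=.
rewrite /Bsol /sol /SX /SY /PX /PY /coordc -/(Fx x) -/(Fy y).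
case: c => [i|j];
  (case: ifP => [/and5P[h1 h2 h3 h4 /andP[h5 h6]]|hn];
  [by rewrite h1 h2 h3 h4 h5 h6 |
   apply/esym/eqP; rewrite pnatr_eq0 eqb0; apply: contraFN hn => /andP[/and4P[h1 h2 h3 /andP[h5 h6]] h4];
   by apply/and5P; split => //; apply/andP]).
Qed.

Lemma coord_nz x y : Fx x -> Fy y -> coordc x y != 0.
Proof.
rewrite /coordc /Fx /Fy; case: c c_ok => [i|j] hc /forallP hx /forallP hy.
  by move: (hx i); rewrite (negPf hc).
by move: (hy j); rewrite (negPf hc).
Qed.

Lemma sum_ind (w : F) (B : bool) : (B -> w != 0) ->
  \sum_(u | u != 0) (B && (w == u))%:R = B%:R :> algC.
Proof.
case: B => [/(_ isT) w0|_]; last by rewrite big1.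
rewrite (bigD1 w) //= eqxx big1 ?addr0 // => u /andP[_ /negPf]; rewrite eq_sym => ->.
by [].
Qed.

Lemma M_G : M = \sum_(u | u != 0) G u.
Proof.
rewrite /G exchange_big /M; apply: eq_bigr => x _.
rewrite [RHS]exchange_big /=; apply: eq_bigr => y _.
rewrite [RHS]exchange_big /=; apply: eq_bigr => z _.
rewrite sum_ind // => /and4P[hx hy _ _]; exact: coord_nz.
Qed.

Lemma a_dvd_p i : i \in Sx -> (a %| p i)%N.
Proof.
move=> hi; apply: dvdn_trans (dvdn_gcdl _ _) _.
exact: (biggcdn_inf i hi (dvdnn _)).
Qed.

Lemma a_dvd_q j : j \in Sy -> (a %| q j)%N.
Proof.
move=> hj; apply: dvdn_trans (dvdn_gcdr _ _) _.
exact: (biggcdn_inf j hj (dvdnn _)).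
Qed.

Local Notation XS := (\sum_(i | i \in Sx) p i)%N.
Local Notation XU := (\sum_(i | i \notin Sx) p i)%N.
Local Notation YS := (\sum_(j | j \in Sy) q j)%N.
Local Notation YV := (\sum_(j | j \notin Sy) q j)%N.

Lemma XSU : (XS + XU = YS + YV)%N.
Proof.
have E1 := bigID (fun i => i \in Sx) xpredT p.
have E2 := bigID (fun j => j \in Sy) xpredT q.
by rewrite /= in E1 E2; rewrite -E1 -E2 sum_eq.
Qed.

Lemma PX_scale (u : F) (x : {ffun 'I_r -> F}) : PX [ffun i => if i \in Sx then x i else u * x i] = u ^+ XU * PX x.
Proof.
rewrite /PX -prodrXr -big_split /=; apply: eq_bigr => i /negPf hi.
by rewrite ffunE hi exprMn.
Qed.

Lemma PY_scale (u : F) (y : {ffun 'I_s -> F}) : PY [ffun j => if j \in Sy then y j else u * y j] = u ^+ YV * PY y.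
Proof.
rewrite /PY -prodrXr -big_split /=; apply: eq_bigr => j /negPf hj.
by rewrite ffunE hj exprMn.
Qed.

Lemma SX_scale (u : F) (x : {ffun 'I_r -> F}) : SX [ffun i => if i \in Sx then x i else u * x i] = u * SX x.
Proof. by rewrite /SX mulr_sumr; apply: eq_bigr => i /negPf hi; rewrite ffunE hi. Qed.

Lemma SY_scale (u : F) (y : {ffun 'I_s -> F}) : SY [ffun j => if j \in Sy then y j else u * y j] = u * SY y.
Proof. by rewrite /SY mulr_sumr; apply: eq_bigr => j /negPf hj; rewrite ffunE hj. Qed.

Lemma G_scale u : u != 0 -> G u = G 1.
Proof.
move=> u0.
pose hx := fun x : {ffun 'I_r -> F} => [ffun i => if i \in Sx then x i else u * x i].
pose hy := fun y : {ffun 'I_s -> F} => [ffun j => if j \in Sy then y j else u * y j].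
have hx_inj : injective hx.
  move=> x1 x2 /ffunP h; apply/ffunP => i; move: (h i); rewrite !ffunE.
  by case: ifP => // _; move/(mulfI u0).
have hy_inj : injective hy.
  move=> x1 x2 /ffunP h; apply/ffunP => i; move: (h i); rewrite !ffunE.
  by case: ifP => // _; move/(mulfI u0).
pose v := u ^+ (XS %/ a) / u ^+ (YS %/ a).
have v0 : v != 0 by rewrite mulf_neq0 ?invr_eq0 ?expf_neq0.
have va : v ^+ a * u ^+ XU = u ^+ YV.
  have hXS : (a %| XS)%N by apply: dvdn_sum => i; exact: a_dvd_p.
  have hYS : (a %| YS)%N by apply: dvdn_sum => j; exact: a_dvd_q.
  rewrite /v exprMn exprVn -!exprM !divnK //.
  apply: (mulIf (expf_neq0 YS u0)); rewrite mulrAC divfK ?expf_neq0 //.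
  by rewrite -!exprD XSU addnC.
rewrite /G (reindex_inj hx_inj); apply: eq_bigr => x _.
rewrite (reindex_inj hy_inj); apply: eq_bigr => y _.
rewrite (reindex_inj (mulIf v0)); apply: eq_bigr => z _.
congr (_%:R).
have Fxe : Fx (hx x) = Fx x.
  apply: eq_forallb => i; rewrite ffunE; case: (i \in Sx) => //.
  by rewrite mulf_eq0 negb_or u0.
have Fye : Fy (hy y) = Fy y.
  apply: eq_forallb => i; rewrite ffunE; case: (i \in Sy) => //.
  by rewrite mulf_eq0 negb_or u0.
have ce : coordc (hx x) (hy y) = u * coordc x y.
  by rewrite /coordc; case: c c_ok => [i|j] /negPf h; rewrite ffunE h.
have se : sol (hx x) (hy y) (z * v) = sol x y z.
  rewrite /sol SX_scale SY_scale PX_scale PY_scale (inj_eq (mulfI u0)).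
  congr (_ && _).
  have -> : lam * (z * v) ^+ a * (u ^+ XU * PX x) = (lam * z ^+ a * PX x) * (v ^+ a * u ^+ XU).
    by rewrite exprMn; ring.
  by rewrite va [u ^+ YV * _]mulrC (inj_eq (mulIf (expf_neq0 _ u0))).
rewrite /Bsol Fxe Fye se ce mulf_eq0 (negPf v0) orbF -{2}(mulr1 u) (inj_eq (mulfI u0)).
by [].
Qed.

Lemma M_nG : M = n%:R * G 1.
Proof.
rewrite M_G (eq_bigr (fun _ => G 1)); last by move=> u u0; rewrite G_scale.
by rewrite sumr_const card_nz mulr_natl.
Qed.

Definition T (t : F) (m : nat) x y (z : F) : algC :=
  omega lam ^+ m * omega z ^+ (a * m)
  * \prod_(i | i \notin Sx) (psi (t * x i) * omega (x i) ^+ (p i * m))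
  * \prod_(j | j \notin Sy) (psi (- t * y j) * omega ((y j)^-1) ^+ (q j * m)).

Lemma natr_andb (b1 b2 : bool) : (b1 && b2)%:R = b1%:R * b2%:R :> algC.
Proof. by case: b1; case: b2; rewrite ?mulr1 ?mulr0. Qed.

Lemma summand x y z : Fx x -> Fy y -> z != 0 ->
  (sol x y z)%:R = #|F|%:R^-1 * n%:R^-1 * \sum_t \sum_(m < n) T t m x y z.
Proof.
move=> /forallP hx /forallP hy z0.
have hxi : forall i, i \notin Sx -> x i != 0 by move=> i /negPf hi; move: (hx i); rewrite hi.
have hyj : forall j, j \notin Sy -> y j != 0 by move=> j /negPf hj; move: (hy j); rewrite hj.
have PX0 : PX x != 0 by apply: prod_nz => i hi; rewrite expf_neq0 // hxi.
have PY0 : PY y != 0 by apply: prod_nz => j hj; rewrite expf_neq0 // hyj.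
have L0 : lam * z ^+ a * PX x != 0 by rewrite !mulf_neq0 // expf_neq0.
rewrite /sol natr_andb (ind_psi psi0 psiD psi_nontriv) (ind_omega omega1 omegaM omega_gen L0 PY0).
rewrite mulrACA; congr (_ * _); rewrite mulr_suml; apply: eq_bigr => t _.
rewrite mulr_sumr; apply: eq_bigr => m _.
rewrite /T.
have -> : t * (SX x - SY y) = \sum_(i | i \notin Sx) t * x i + \sum_(j | j \notin Sy) - t * y j.
  by rewrite mulrBr /SX /SY !mulr_sumr -sumrN; congr (_ + _); apply: eq_bigr => j _; rewrite mulNr.
rewrite psiD !psi_sum //.
have hz : z ^+ a != 0 by rewrite expf_neq0.
have hlz : lam * z ^+ a != 0 by rewrite mulf_neq0.
have PYi : (PY y)^-1 != 0 by rewrite invr_eq0.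
rewrite (omegaM L0 PYi) (omegaM hlz PX0) (omegaM lam0 hz) oX //.
have oPX : omega (PX x) = \prod_(i | i \notin Sx) omega (x i) ^+ p i.
  rewrite /PX oProd; last by move=> i hi; rewrite expf_neq0 // hxi.
  by apply: eq_bigr => i hi; rewrite oX // hxi.
have oPY : omega (PY y) = \prod_(j | j \notin Sy) omega (y j) ^+ q j.
  rewrite /PY oProd; last by move=> j hj; rewrite expf_neq0 // hyj.
  by apply: eq_bigr => j hj; rewrite oX // hyj.
rewrite oVE // oPX oPY -prodfV !exprMn -!prodrXl !big_split /=.
have -> : \prod_(j | j \notin Sy) ((omega (y j) ^+ q j)^-1) ^+ m
        = \prod_(j | j \notin Sy) omega (y j)^-1 ^+ (q j * m).
  apply: eq_bigr => j hj; rewrite oVE ?hyj //.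
  by rewrite !exprVn exprM.
have -> : \prod_(i | i \notin Sx) (omega (x i) ^+ p i) ^+ m
        = \prod_(i | i \notin Sx) omega (x i) ^+ (p i * m).
  by apply: eq_bigr => i hi; rewrite exprM.
rewrite -exprM; ring.
Qed.

Definition K (t : F) (m : nat) : algC :=
  omega lam ^+ m * ((n %| a * m)%:R * n%:R)
  * \prod_(i | i \notin Sx) (\sum_(w | w != 0) psi (t * w) * omega w ^+ (p i * m))
  * \prod_(j | j \notin Sy) (\sum_(w | w != 0) psi (- t * w) * omega w^-1 ^+ (q j * m)).

Lemma factor_tm t m :
  \sum_(x | Fx x) \sum_(y | Fy y) \sum_(z | z != 0) T t m x y z = K t m.
Proof.
rewrite /T.
set PU := fun x : {ffun 'I_r -> F} => \prod_(i | i \notin Sx) (psi (t * x i) * omega (x i) ^+ (p i * m)).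
set PV := fun y : {ffun 'I_s -> F} => \prod_(j | j \notin Sy) (psi (- t * y j) * omega (y j)^-1 ^+ (q j * m)).
set A := omega lam ^+ m.
transitivity (\sum_(x | Fx x) \sum_(y | Fy y)
   ((A * \sum_(z | z != 0) omega z ^+ (a * m)) * PU x * PV y)).
  apply: eq_bigr => x _; apply: eq_bigr => y _.
  by rewrite mulr_sumr !mulr_suml.
transitivity (\sum_(x | Fx x)
   ((A * \sum_(z | z != 0) omega z ^+ (a * m)) * PU x * \sum_(y | Fy y) PV y)).
  by apply: eq_bigr => x _; rewrite [RHS]mulr_sumr.
rewrite -mulr_suml -mulr_sumr.
rewrite /PU /PV /Fx /Fy.
rewrite (fam_sum _ (fun i w => psi (t * w) * omega w ^+ (p i * m))).
rewrite (fam_sum _ (fun j w => psi (- t * w) * omega w^-1 ^+ (q j * m))).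
by rewrite sumO.
Qed.

Lemma M_sum : M = #|F|%:R^-1 * n%:R^-1 * \sum_t \sum_(m < n) K t m.
Proof.
have E : M = \sum_(x | Fx x) \sum_(y | Fy y) \sum_(z | z != 0)
     (#|F|%:R^-1 * n%:R^-1 * \sum_t \sum_(m < n) T t m x y z).
  rewrite /M [RHS]big_mkcond; apply: eq_bigr => x _.
  case: (boolP (Fx x)) => hx; last first.
    by rewrite big1 // => y _; rewrite big1 // => z _; rewrite /Bsol (negPf hx).
  rewrite [RHS]big_mkcond; apply: eq_bigr => y _.
  case: (boolP (Fy y)) => hy; last first.
    by rewrite big1 // => z _; rewrite /Bsol (negPf hy) andbF.
  rewrite [RHS]big_mkcond; apply: eq_bigr => z _.
  case: (boolP (z != 0)) => hz; last by rewrite /Bsol (negPf hz) !andbF.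
  by rewrite /Bsol hx hy hz /= summand.
rewrite E.
transitivity (#|F|%:R^-1 * n%:R^-1 *
  \sum_(x | Fx x) \sum_(y | Fy y) \sum_(z | z != 0) \sum_t \sum_(m < n) T t m x y z).
  rewrite mulr_sumr; apply: eq_bigr => x _; rewrite mulr_sumr; apply: eq_bigr => y _.
  by rewrite mulr_sumr.
congr (_ * _).
under eq_bigr => x _ do under eq_bigr => y _ do rewrite swap_in.
under eq_bigr => x _ do rewrite swap_in.
rewrite swap_in; apply: eq_bigr => t _; apply: eq_bigr => m _.
exact: factor_tm.
Qed.

Definition eps : F := (-1) ^+ (\sum_(j < s) q j)%N.

Lemma eps0 : eps != 0.
Proof. by rewrite /eps expf_neq0 // oppr_eq0 oner_neq0. Qed.

Lemma phase (t : F) m : t != 0 -> (n %| a * m)%N ->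
  omega t^-1 ^+ (XU * m) * omega (- t) ^+ (YV * m) = omega eps ^+ m.
Proof.
move=> t0 hd.
have hYS : (n %| YS * m)%N.
  apply: dvdn_trans hd _; apply: dvdn_mul (dvdnn m).
  by apply: dvdn_sum => j; exact: a_dvd_q.
have hXS : (n %| XS * m)%N.
  apply: dvdn_trans hd _; apply: dvdn_mul (dvdnn m).
  by apply: dvdn_sum => i; exact: a_dvd_p.
have m10 : (-1 : F) != 0 by rewrite oppr_eq0 oner_neq0.
have E1 : omega eps ^+ m = omega (-1) ^+ (YV * m).
  rewrite /eps oX // -exprM.
  have E2 := bigID (fun j => j \in Sy) xpredT q; rewrite /= in E2.
  by rewrite E2 mulnDl exprD (oD m10 hYS) mul1r.
have E3 : omega t ^+ (YV * m) = omega t ^+ (XU * m).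
  rewrite -[LHS]mul1r -(oD t0 hYS) -exprD -mulnDl -XSU mulnDl exprD.
  by rewrite (oD t0 hXS) mul1r.
rewrite E1 (_ : - t = -1 * t); last by rewrite mulN1r.
rewrite omegaM // exprMn E3 mulrCA -exprMn.
by rewrite (omegaV omega1 omegaM t0) expr1n mulr1.
Qed.

Lemma K_t t m : t != 0 ->
  K t m = (n %| a * m)%:R * n%:R *
    (omega lam ^+ m * omega eps ^+ m
     * \prod_(i | i \notin Sx) gsum psi omega (p i * m)
     * \prod_(j | j \notin Sy) gneg psi omega (q j * m)).
Proof.
move=> t0; rewrite /K.
rewrite (eq_bigr (fun i => omega t^-1 ^+ (p i * m) * gsum psi omega (p i * m)));
  last by move=> i _; rewrite At.
rewrite [X in _ * X](eq_bigr (fun j => omega (- t) ^+ (q j * m) * gneg psi omega (q j * m)));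
  last by move=> j _; rewrite Bt.
case: (boolP (n %| a * m)%N) => hd; last by rewrite /= !(mul0r, mulr0).
rewrite !big_split /= !prodrXr -!big_distrl /=.
rewrite -(phase t0 hd).
ring.
Qed.


Lemma gcd_mulr (I : finType) (P : pred I) (f : I -> nat) m :
  (\big[gcdn/0]_(i | P i) (f i * m) = (\big[gcdn/0]_(i | P i) f i) * m)%N.
Proof.
by rewrite (big_morph (fun x => x * m)%N (fun x y => muln_gcdl x y m) (mul0n m)).
Qed.

Lemma K_0 (m : 'I_n) :
  K 0 m = (m == 0 :> nat)%:R * n%:R ^+ (#|[pred i : 'I_r | i \notin Sx]| + #|[pred j : 'I_s | j \notin Sy]|).+1.
Proof.
rewrite /K.
rewrite (eq_bigr (fun i => (n %| p i * m)%:R * n%:R)); last by move=> i _; rewrite A0.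
rewrite [X in _ * X](eq_bigr (fun j => (n %| q j * m)%:R * n%:R)); last by move=> j _; rewrite B0.
case: (boolP (m == 0 :> nat)) => [/eqP ->|m0].
  rewrite !muln0 dvdn0 expr0 !mul1r.
  rewrite (eq_bigr (fun=> n%:R)); last by move=> i _; rewrite muln0 dvdn0 mul1r.
  rewrite [X in _ * X](eq_bigr (fun=> n%:R)); last by move=> j _; rewrite muln0 dvdn0 mul1r.
  by rewrite !prodr_const -exprS -exprD addSn.
rewrite mul0r.
case: (boolP (n %| a * m)%N) => hd; last by rewrite /= !(mul0r, mulr0).
case: (boolP [forall i, (i \notin Sx) ==> (n %| p i * m)%N]) => hU; last first.
  move/forallPn: hU => [i]; rewrite negb_imply => /andP[hi hn].
  by rewrite (prod_zero (P := fun k => k \notin Sx) hi) ?mulr0 ?mul0r // (negPf hn) mul0r.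
case: (boolP [forall j, (j \notin Sy) ==> (n %| q j * m)%N]) => hV; last first.
  move/forallPn: hV => [j]; rewrite negb_imply => /andP[hj hn].
  by rewrite (prod_zero (P := fun k => k \notin Sy) hj) ?mulr0 ?mul0r // (negPf hn) mul0r.
exfalso.
have hp : forall i, (n %| p i * m)%N.
  move=> i; case: (boolP (i \in Sx)) => hi.
    by apply: dvdn_trans hd _; apply: dvdn_mul (dvdnn _); exact: a_dvd_p.
  exact: (implyP (forallP hU i)).
have hq : forall j, (n %| q j * m)%N.
  move=> j; case: (boolP (j \in Sy)) => hj.
    by apply: dvdn_trans hd _; apply: dvdn_mul (dvdnn _); exact: a_dvd_q.
  exact: (implyP (forallP hV j)).
have : (n %| gcdn (\big[gcdn/0]_(i < r) (p i * m)) (\big[gcdn/0]_(j < s) (q j * m)))%N.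
  by rewrite dvdn_gcd; apply/andP; split; apply/dvdn_biggcdP => k _.
rewrite !gcd_mulr -muln_gcdl gcd1 mul1n => /dvdn_leq.
by rewrite lt0n m0 leqNgt ltn_ord => /(_ isT).
Qed.


Definition W : algC := \sum_(m < n) (n %| a * m)%:R *
    (omega lam ^+ m * omega eps ^+ m
     * \prod_(i | i \notin Sx) gsum psi omega (p i * m)
     * \prod_(j | j \notin Sy) gneg psi omega (q j * m)).

Lemma M_value : M = #|F|%:R^-1 * n%:R^-1 *
  (n%:R ^+ (#|[pred i : 'I_r | i \notin Sx]| + #|[pred j : 'I_s | j \notin Sy]|).+1
   + n%:R * (n%:R * W)).
Proof.
rewrite M_sum (bigD1 0) //=; congr (_ * (_ + _)).
  rewrite (eq_bigr _ (fun m _ => K_0 m)).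
  rewrite (bigD1 (Ordinal (n_gt0 F))) //= mul1r big1 ?addr0 // => m /negPf hm.
  suff -> : (m == 0 :> nat) = false by rewrite mul0r.
  by apply/negbTE; apply: contraFN hm => /eqP h; apply/eqP/val_inj.
rewrite (eq_bigr (fun _ => n%:R * W)); last first.
  move=> t t0; rewrite /W mulr_sumr; apply: eq_bigr => m _.
  rewrite (K_t m t0); ring.
rewrite sumr_const (_ : #|_| = n); last exact: cardC1 0.
rewrite -mulr_natr; ring.
Qed.

Lemma gauss_pos k : gauss psi omega (k%:Z) = gsum psi omega k.
Proof. by []. Qed.

Lemma gauss_neg k : gauss psi omega (- (k%:Z)) = gneg psi omega k.
Proof.
rewrite /gauss /gneg; apply: eq_bigr => x x0.
by rewrite -invr_expz oVE // exprVn.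
Qed.

Lemma card_U : #|[pred i : 'I_r | i \notin Sx]| = (r - #|Sx|)%N.
Proof.
have h := cardsC Sx; rewrite card_ord in h.
have -> : #|[pred i : 'I_r | i \notin Sx]| = #|~: Sx| by apply: eq_card => k; rewrite !inE.
lia.
Qed.

Lemma card_V : #|[pred j : 'I_s | j \notin Sy]| = (s - #|Sy|)%N.
Proof.
have h := cardsC Sy; rewrite card_ord in h.
have -> : #|[pred j : 'I_s | j \notin Sy]| = #|~: Sy| by apply: eq_card => k; rewrite !inE.
lia.
Qed.

Lemma main_sec (Ccell : is_cell C) (Cne : C != [::]) (CS : (cellS C <= r + s - 1)%N) :
  (Ncell p q C lam c)%:R =
    ((#|F|.-1) ^ (r + s - size C - 2))%:R / #|F|%:R
    + (-1) ^+ cellS C * ((#|F|.-1) ^ (cellS C - size C - 1))%:R / #|F|%:R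
      * \sum_(m < #|F|.-1)
          ((#|F|.-1 %| a * m)%N%:R
           * \prod_(i < r) gauss psi omega (p i * m)%N%:Z
           * \prod_(j < s) gauss psi omega (- (q j * m)%N%:Z)
           * omega (eps * lam) ^+ m).
Proof.
have Hsum : \sum_(m < #|F|.-1)
          ((#|F|.-1 %| a * m)%N%:R
           * \prod_(i < r) gauss psi omega (p i * m)%N%:Z
           * \prod_(j < s) gauss psi omega (- (q j * m)%N%:Z)
           * omega (eps * lam) ^+ m) = (-1) ^+ #|Sx| * (-1) ^+ #|Sy| * W.
  rewrite /W mulr_sumr; apply: eq_bigr => m _.
  case: (boolP (n %| a * m)%N) => hd; last by rewrite /= !(mul0r, mulr0).
  rewrite (bigID (fun i => i \in Sx)) (bigID (fun j => j \in Sy) xpredT) /=.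
  have e1 : \prod_(i in Sx) gauss psi omega (p i * m)%N%:Z = (-1) ^+ #|Sx|.
    rewrite (eq_bigr (fun _ => -1)) ?prodr_const // => i hi; rewrite gauss_pos gsumD //.
    by apply: dvdn_trans hd _; apply: dvdn_mul (dvdnn _); exact: a_dvd_p.
  have e2 : \prod_(j in Sy) gauss psi omega (- (q j * m)%N%:Z) = (-1) ^+ #|Sy|.
    rewrite (eq_bigr (fun _ => -1)) ?prodr_const // => j hj; rewrite gauss_neg gnegD //.
    by apply: dvdn_trans hd _; apply: dvdn_mul (dvdnn _); exact: a_dvd_q.
  have e3 : \prod_(i < r | i \notin Sx) gauss psi omega (p i * m)%N%:Z
          = \prod_(i < r | i \notin Sx) gsum psi omega (p i * m).
    by apply: eq_bigr => i _; rewrite gauss_pos.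
  have e4 : \prod_(j < s | j \notin Sy) gauss psi omega (- (q j * m)%N%:Z)
          = \prod_(j < s | j \notin Sy) gneg psi omega (q j * m).
    by apply: eq_bigr => j _; rewrite gauss_neg.
  rewrite e1 e2 e3 e4 omegaM ?eps0 // exprMn.
  ring.
rewrite Hsum /Ncell natrM Nprime_G.
have -> : G 1 = M / n%:R by rewrite M_nG mulrC mulKf // n_neq0.
rewrite M_value card_U card_V.
have hsz := cell_size Ccell Cne.
have hSx : (#|Sx| <= r)%N by rewrite -[X in (_ <= X)%N]card_ord max_card.
have hSy : (#|Sy| <= s)%N by rewrite -[X in (_ <= X)%N]card_ord max_card.
have hsign : (-1) ^+ cellS C * ((-1) ^+ #|Sx| * (-1) ^+ #|Sy|) = 1 :> algC.
  by rewrite /cellS exprD mulrACA -!expr2 !sqrr_sign mulr1.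
have hexp : ((cellS C - size C - 1) + (r - #|Sx| + (s - #|Sy|)).+1
            = (r + s - size C - 2) + 2)%N.
  move: hsz CS hSx hSy; rewrite /cellS; lia.
have q0 : (#|F|%:R : algC) != 0 by rewrite pnatr_eq0 cardF.
have n0 := n_neq0 F.
rewrite !natrX.
set N := (n%:R : algC).
have E : N ^+ (cellS C - size C - 1) * N ^+ (r - #|Sx| + (s - #|Sy|)).+1
       = N ^+ (r + s - size C - 2) * N * N.
  by rewrite -exprD hexp exprD expr2 mulrA.
set e := (cellS C - size C - 1)%N.
set k1 := (r - #|Sx| + (s - #|Sy|)).+1.
set Q := (#|F|%:R : algC).
have hR : (-1) ^+ cellS C * N ^+ e / Q * ((-1) ^+ #|Sx| * (-1) ^+ #|Sy| * W) = N ^+ e / Q * W.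
  transitivity (((-1) ^+ cellS C * ((-1) ^+ #|Sx| * (-1) ^+ #|Sy|)) * (N ^+ e / Q * W)).
    by ring.
  by rewrite hsign mul1r.
rewrite hR.
transitivity (N ^+ e * N ^+ k1 / (Q * N * N) + N ^+ e * W / Q).
  by field; rewrite n0 q0.
rewrite E; field; by rewrite n0 q0.
Qed.

End Main.

Unset Implicit Arguments.
Set Strict Implicit.
Set Printing Implicit Defensive.

Theorem mainTheorem13
  (F : finFieldType)
  (psi : F -> algC)
  (psi0 : psi 0 = 1)
  (psiD : forall x y : F, psi (x + y) = psi x * psi y)
  (psi_nontriv : exists x : F, psi x != 1)
  (omega : F -> algC)
  (omega1 : omega 1 = 1)
  (omegaM : forall x y : F, x != 0 -> y != 0 -> omega (x * y) = omega x * omega y)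
  (omega_gen : forall m : nat,
      (forall x : F, x != 0 -> omega x ^+ m = 1) -> (#|F|.-1 %| m)%N)
  (r s : nat) (p : 'I_r -> nat) (q : 'I_s -> nat)
  (p_pos : forall i, (0 < p i)%N) (q_pos : forall j, (0 < q j)%N)
  (sum_eq : (\sum_(i < r) p i)%N = (\sum_(j < s) q j)%N)
  (gcd1 : gcdn (\big[gcdn/0%N]_(i < r) p i) (\big[gcdn/0%N]_(j < s) q j) = 1%N)
  (lam : F) (lam0 : lam != 0)
  (C : seq ('I_r * 'I_s)) (Ccell : is_cell C) (Cne : C != [::])
  (CS : (cellS C <= r + s - 1)%N)
  (c : 'I_r + 'I_s)
  (c_ok : match c with inl i => i \notin cellSx C | inr j => j \notin cellSy C end) :
  let qF := #|F| in
  let eps : F := (-1) ^+ (\sum_(j < s) q j)%N in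
  let aS := cell_a p q C in
  (Ncell p q C lam c)%:R =
    ((qF.-1) ^ (r + s - size C - 2))%:R / qF%:R
    + (-1) ^+ cellS C * ((qF.-1) ^ (cellS C - size C - 1))%:R / qF%:R
      * \sum_(m < qF.-1)
          ((qF.-1 %| aS * m)%N%:R
           * \prod_(i < r) gauss psi omega (p i * m)%N%:Z
           * \prod_(j < s) gauss psi omega (- (q j * m)%N%:Z)
           * omega (eps * lam) ^+ m).
Proof.
move=> qF eps' aS.
exact: (main_sec psi0 psiD psi_nontriv omega1 omegaM omega_gen sum_eq gcd1 lam0 c_ok Ccell Cne CS).
Qed.
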